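(* Let $\mathbb F$ be a field, $d\ge 1$ and $1\le m\le d$ integers, $\sigma\in\mathbb Z^d$ a signature vector, $\psi=(\psi_1,\dots,\psi_d)\in\mathbb F^d$, and let $\mathbf D$ be a $(d;m)$ signed determinant message matrix with signature $\sigma$ (for any admissible choice of its symbols). Let $\Xi=\Xi^{(m)}_{\sigma,\psi}$ be the repair-encoder matrix. Then for every $m$-subset $\mathcal I\subseteq[d]$, $$\sum_{y=1}^{d}\psi_y\,\mathbf D_{y,\mathcal I}=\sum_{i\in\mathcal I}(-1)^{\sigma(i)+\mathrm{ind}_{\mathcal I}(i)}\,[\mathbf D\,\Xi]_{i,\mathcal I\setminus\{i\}}.$$
   Context: Notation: $[d]=\{1,\dots,d\}$; for a finite set $\mathcal I$ of integers and an integer $x$, $\mathrm{ind}_{\mathcal I}(x)=|\{y\in\mathcal I: y\le x\}|$. $(d;m)$ signed determinant message matrix with signature $\sigma$: choose values $v_{x,\mathcal X}\in\mathbb F$ for every $m$-subset $\mathcal X\subseteq[d]$ and $x\in\mathcal X$, and values $w_{y,\mathcal Y}\in\mathbb F$ for every $(m+1)$-subset $\mathcal Y\subseteq[d]$ and $y\in\mathcal Y$, such that for every such $\mathcal Y$ the parity equation $\sum_{y\in\mathcal Y}(-1)^{\mathrm{ind}_{\mathcal Y}(y)}w_{y,\mathcal Y}=0$ holds (the values $w_{y,\mathcal Y}$ with $y<\max\mathcal Y$ and all $v$'s are free; $w_{\max\mathcal Y,\mathcal Y}$ is determined by the parity equation). $\mathbf D$ has rows indexed by $x\in[d]$ and columns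 indexed by $m$-subsets $\mathcal I\subseteq[d]$, with $\mathbf D_{x,\mathcal I}=(-1)^{\sigma(x)}v_{x,\mathcal I}$ if $x\in\mathcal I$ and $\mathbf D_{x,\mathcal I}=(-1)^{\sigma(x)}w_{x,\mathcal I\cup\{x\}}$ if $x\notin\mathcal I$. (For $m=0$, $\mathbf D$ is the all-zero $d\times 1$ matrix with column indexed by $\varnothing$.) Repair-encoder matrix $\Xi^{(m)}_{\sigma,\psi}$: rows indexed by $m$-subsets $\mathcal I\subseteq[d]$, columns by $(m-1)$-subsets $\mathcal J\subseteq[d]$, with entry $(-1)^{\sigma(y)+\mathrm{ind}_{\mathcal I}(y)}\psi_y$ if $\mathcal J\subseteq\mathcal I$ and $\mathcal I\setminus\mathcal J=\{y\}$, and $0$ otherwise. *)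

(* Defs.v *)
From HB Require Import structures.
From mathcomp Require Import all_boot all_order all_algebra.
Set Implicit Arguments. Unset Strict Implicit. Unset Printing Implicit Defensive.
Import Order.TTheory GRing.Theory Num.Theory.
Local Open Scope ring_scope.

(* [d] is modelled by 'I_d (0-based, order-preserving relabelling x |-> x+1).
   Subsets of [d] are {set 'I_d}. *)

Definition ind (d : nat) (I : {set 'I_d}) (x : 'I_d) : nat :=
  #|[set y in I | (y <= x)%N]|.

Definition parity_ok (F : fieldType) (d m : nat)
  (w : 'I_d -> {set 'I_d} -> F) : Prop :=
  forall Y : {set 'I_d}, #|Y| = m.+1 ->
    \sum_(y in Y) (-1) ^+ (ind Y y) * w y Y = 0.

(* Entries of the (d;m) signed determinant message matrix D with signature
   sigma, built from symbols v (v_{x,X}, x in X, |X| = m) and w (w_{y,Y},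
   y in Y, |Y| = m+1). *)
Definition sdmm (F : fieldType) (d m : nat) (sigma : 'I_d -> int)
  (v w : 'I_d -> {set 'I_d} -> F) (x : 'I_d) (I : {set 'I_d}) : F :=
  if m == 0%N then 0 else
  (-1) ^ (sigma x) * (if x \in I then v x I else w x (x |: I)).

(* Repair-encoder matrix Xi^{(m)}_{sigma,psi}: row index an m-subset I,
   column index an (m-1)-subset J. *)
Definition Xi (F : fieldType) (d : nat) (sigma : 'I_d -> int) (psi : 'I_d -> F)
  (I J : {set 'I_d}) : F :=
  if (J \subset I) && (#|I :\: J| == 1%N) then
    match [pick y in I :\: J] with
    | Some y => (-1) ^ (sigma y + (ind I y)%:Z) * psi y
    | None => 0
    end
  else 0.

Definition DXi (F : fieldType) (d m : nat) (sigma : 'I_d -> int)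
  (psi : 'I_d -> F) (v w : 'I_d -> {set 'I_d} -> F) (i : 'I_d) (J : {set 'I_d}) : F :=
  \sum_(I : {set 'I_d} | #|I| == m) sdmm m sigma v w i I * Xi sigma psi I J.

(* Main.v *)
Require Import Defs.
From HB Require Import structures.
From mathcomp Require Import all_boot all_order all_algebra.
From mathcomp Require Import ring zify.
Import Order.TTheory GRing.Theory Num.Theory.
Local Open Scope ring_scope.

Lemma ind_U1 (d : nat) (S : {set 'I_d}) (x z : 'I_d) :
  x \notin S -> ind (x |: S) z = (ind S z + (x <= z)%N)%N.
Proof.
move=> xS; rewrite /ind; case: (leqP x z) => h.
  have -> : [set y in x |: S | (y <= z)%N] = x |: [set y in S | (y <= z)%N].
    apply/setP => u; rewrite !inE; case: (eqVneq u x) => [->|] //=; by rewrite h.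
  by rewrite cardsU1 inE (negbTE xS) addnC.
have -> : [set y in x |: S | (y <= z)%N] = [set y in S | (y <= z)%N].
  apply/setP => u; rewrite !inE; case: (eqVneq u x) => [->|] //=.
  by rewrite (negbTE xS) leqNgt h.
by rewrite addn0.
Qed.

Lemma sgnK (F : fieldType) (z : int) : (-1 : F) ^ z * (-1) ^ z = 1.
Proof.
case: z => n /=.
  by rewrite -exprMn mulrNN mulr1 expr1n.
by rewrite -invfM -exprMn mulrNN mulr1 expr1n invr1.
Qed.

Lemma sgnnK (F : fieldType) (n : nat) : (-1 : F) ^+ n * (-1) ^+ n = 1.
Proof. by rewrite -exprMn mulrNN mulr1 expr1n. Qed.

Lemma sgnD (F : fieldType) (a : int) (n : nat) :
  (-1 : F) ^ (a + n%:Z) = (-1) ^ a * (-1) ^+ n.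
Proof. by rewrite expfzDr ?oppr_eq0 ?oner_eq0. Qed.

Lemma DXi_expand (F : fieldType) (d m : nat) (sigma : 'I_d -> int)
  (psi : 'I_d -> F) (v w : 'I_d -> {set 'I_d} -> F) (i : 'I_d) (J : {set 'I_d}) :
  #|J|.+1 = m ->
  DXi m sigma psi v w i J =
  \sum_(y in ~: J) sdmm m sigma v w i (y |: J) *
      ((-1) ^ (sigma y + (ind (y |: J) y)%:Z) * psi y).
Proof.
move=> hJ; rewrite /DXi.
set S := [set y |: J | y in ~: J].
rewrite (bigID (mem S)) /=.
rewrite [X in _ + X]big1 ?addr0; last first.
  move=> K /andP [_ KS]; rewrite /Xi.
  case: ifP => [/andP [JK /cards1P [y hy]]|_]; last by rewrite mulr0.
  exfalso; move: KS; apply/negP; rewrite negbK.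
  have yK : y \in K :\: J by rewrite hy set11.
  have -> : K = y |: J.
    apply/setP => u; rewrite in_setU1.
    case: (eqVneq u y) => [->|uy] /=; first by move: yK; rewrite inE => /andP [].
    case uJ: (u \in J); first by rewrite (subsetP JK).
    apply/negbTE; apply/negP => uK.
    have : u \in K :\: J by rewrite inE uJ uK.
    by rewrite hy inE (negbTE uy).
  apply/imsetP; exists y => //; move: yK; rewrite !inE => /andP [].
  by [].
rewrite (eq_bigl (mem S)) ?addr0; last first.
  move=> K /=; apply/andb_idl => /imsetP [y]; rewrite inE => yJ ->.
  by rewrite cardsU1 yJ add1n hJ.
rewrite big_imset /=; last first.
  move=> y y'; rewrite !inE => yJ y'J e.
  have : y \in y' |: J by rewrite -e setU11.
  by rewrite in_setU1 (negbTE yJ) orbF => /eqP.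
apply: eq_bigr => y; rewrite inE => yJ; congr (_ * _).
rewrite /Xi.
have -> : (y |: J) :\: J = [set y].
  apply/setP => u; rewrite !inE; case: (eqVneq u y) => [->|] //=.
  by rewrite (negbTE yJ). by case: (u \in J).
by rewrite subsetU1 cards1 /= pick_set1.
Qed.

Theorem proposition3 (F : fieldType) (d m : nat) (hd : (1 <= d)%N)
  (hm1 : (1 <= m)%N) (hmd : (m <= d)%N)
  (sigma : 'I_d -> int) (psi : 'I_d -> F)
  (v w : 'I_d -> {set 'I_d} -> F) (hw : parity_ok m w)
  (I : {set 'I_d}) (hI : #|I| = m) :
  \sum_(y < d) psi y * sdmm m sigma v w y I =
  \sum_(i in I) (-1) ^ (sigma i + (ind I i)%:Z) * DXi m sigma psi v w i (I :\ i).
Proof.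
have m0 : (m == 0%N) = false by case: m hm1 {hI hmd hw}.
transitivity (\sum_(i in I) (-1) ^ (sigma i + (ind I i)%:Z) *
  (sdmm m sigma v w i (i |: (I :\ i)) * ((-1) ^ (sigma i + (ind (i |: (I :\ i)) i)%:Z) * psi i)
  + \sum_(y in ~: I) sdmm m sigma v w i (y |: (I :\ i)) *
      ((-1) ^ (sigma y + (ind (y |: (I :\ i)) y)%:Z) * psi y))); last first.
  apply: eq_bigr => i iI; rewrite DXi_expand; last first.
    by rewrite -hI (cardsD1 i I) iI.
  have -> : ~: (I :\ i) = i |: ~: I.
    by apply/setP => u; rewrite !inE; case: (eqVneq u i).
  by rewrite big_setU1 // inE iI.
symmetry. under eq_bigr => i _ do rewrite mulrDr big_distrr.
rewrite big_split /= [X in _ + X]exchange_big /=.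
rewrite [RHS](bigID (mem I)) /=; symmetry; congr (_ + _).
  apply: eq_bigr => i iI; rewrite setD1K //.
  rewrite /sdmm m0 iI.
  set s := (-1) ^ (sigma i + (ind I i)%:Z).
  have ss : s * s = 1 by rewrite sgnK.
  transitivity (s * s * (psi i * ((-1) ^ sigma i * v i I))); first by rewrite ss mul1r.
  ring.
rewrite (eq_bigl (mem (~: I))); last by move=> y; rewrite /= inE.
apply: eq_bigr => y yI0; have yI : y \notin I by rewrite -in_setC; exact: yI0.
set Y := y |: I.
have hY : #|Y| = m.+1 by rewrite cardsU1 yI hI.
have par := hw Y hY.
rewrite (big_setU1 _ yI) /= in par.
have hterm : forall i, i \in I ->
  (-1) ^ (sigma i + (ind I i)%:Z) *
    (sdmm m sigma v w i (y |: (I :\ i)) *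
       ((-1) ^ (sigma y + (ind (y |: (I :\ i)) y)%:Z) * psi y))
  = ((-1) ^ sigma y * psi y) * (- (-1) ^+ ind Y y) * ((-1) ^+ ind Y i * w i Y).
  move=> i iI.
  have iy : i != y by apply/eqP => e; move: yI; rewrite -e iI.
  have iK : i \notin y |: (I :\ i) by rewrite !inE eqxx (negbTE iy).
  rewrite /sdmm m0 (negbTE iK).
  have -> : i |: (y |: (I :\ i)) = Y by rewrite setUCA setD1K. rewrite !sgnD.
  have hnat : (ind I i + ind (y |: (I :\ i)) y).+1 = (ind Y i + ind Y y)%N.
    have yD : y \notin I :\ i by rewrite !inE negb_and yI orbT.
    rewrite /Y ind_U1 // ind_U1 // ind_U1 //.
    have e : ind I y = (ind (I :\ i) y + (i <= y)%N)%N by rewrite -{1}(setD1K iI) ind_U1 // !inE eqxx.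
    rewrite e.
    rewrite leqnn.
    have h1 : (nat_of_ord y != nat_of_ord i) by rewrite eq_sym.
    move: h1; case: ltngtP => //= _ _; lia.
  have hs : (-1 : F) ^+ (ind I i + ind (y |: (I :\ i)) y) = - ((-1) ^+ ind Y i * (-1) ^+ ind Y y).
    by rewrite -exprD -hnat exprS mulN1r opprK.
  move: hs; rewrite exprD => hs.
  set a := (-1 : F) ^+ ind I i in hs *.
  set b := (-1 : F) ^+ ind (y |: (I :\ i)) y in hs *.
  have ss := sgnK F (sigma i).
  transitivity (((-1) ^ sigma i * (-1) ^ sigma i) * ((a * b) * ((-1) ^ sigma y * psi y * w i Y)));
    first ring.
  rewrite ss mul1r hs; ring.
rewrite (eq_bigr _ hterm) -big_distrr /=.
have -> : \sum_(i in I) (-1) ^+ ind Y i * w i Y = - ((-1) ^+ ind Y y * w y Y).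
  by move/eqP: par; rewrite addrC addr_eq0 => /eqP.
rewrite /sdmm m0 (negbTE yI).
have kk := sgnnK F (ind Y y).
transitivity ((-1) ^+ ind Y y * (-1) ^+ ind Y y * (psi y * ((-1) ^ sigma y * w y (y |: I))));
  first by rewrite kk mul1r.
rewrite /Y; ring.
Qed.
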